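(* Consider the quadratic infinite-horizon dynamic multi-agent system described in the context. Suppose $(\mathbf A,\mathbf B)$ is controllable and there is $C>0$ with $C(t)\ge C$ for all $t\ge0$. Let $\mathbf P$ be the symmetric positive definite (stabilizing) solution of the discrete algebraic Riccati equation $\mathbf P=\mathbf A^\top\mathbf P\mathbf A+\mathbf Q-\mathbf A^\top\mathbf P\mathbf B(\mathbf B^\top\mathbf P\mathbf B+\mathbf R)^{-1}\mathbf B^\top\mathbf P\mathbf A$, let $\mathbf K=-(\mathbf R+\mathbf B^\top\mathbf P\mathbf B)^{-1}\mathbf B^\top\mathbf P\mathbf A$, assume $\mathbf K^\top\mathbf H\mathbf K\neq0$, and set $$\mathbb X_0=\Big\{\mathbf x(0)\in\mathbb R^{nd}:\ \|\mathbf x(0)\|^2\le\frac{C\,\sigma_{\min}(\mathbf P)}{\sigma_{\max}(\mathbf P)\,\sigma_{\max}(\mathbf K^\top\mathbf H\mathbf K)}\Big\}.$$ If $\mathbf x(0)\in\mathbb X_0$, then: (i) the infinite-horizon social welfare maximization problem is feasible and its optimal control input is given by the linear feedback $\mathbf u^\ast(t)=\mathbf K\mathbf x(t)$ for all $t\ge0$; (ii) there is an infinite-horizon competitive equilibrium whose price sequence is $\lambda^\ast_t=0$ for all $t\ge0$ (with control inputs given by this feedback).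
   Context: Quadratic infinite-horizon dynamic multi-agent system: $n$ agents $\mathcal V=\{1,\dots,n\}$, times $t=0,1,2,\dots$; agent $i$ has state $\mathbf x_i(t)\in\mathbb R^d$, input $\mathbf u_i(t)\in\mathbb R^m$, dynamics $\mathbf x_i(t+1)=\mathbf A_i\mathbf x_i(t)+\mathbf B_i\mathbf u_i(t)$, utility $f_i(\mathbf x,\mathbf u)=-\mathbf x^\top\mathbf Q_i\mathbf x-\mathbf u^\top\mathbf R_i\mathbf u$ and consumption $h_i(\mathbf u)=\mathbf u^\top\mathbf H_i\mathbf u$ with $\mathbf Q_i,\mathbf R_i,\mathbf H_i$ symmetric positive definite; excess resources $a_i(t)\in\mathbb R$, $C(t)=\sum_ia_i(t)$; traded resources $e_i(t)\in\mathbb R$. Stacked quantities: $\mathbf x(t)=(\mathbf x_1(t),\dots,\mathbf x_n(t))$, $\mathbf u(t)=(\mathbf u_1(t),\dots,\mathbf u_n(t))$, $\mathbf A=\mathrm{blockdiag}(\mathbf A_i)$, $\mathbf B=\mathrm{blockdiag}(\mathbf B_i)$, $\mathbf Q=\mathrm{blockdiag}(\mathbf Q_i)$, $\mathbf R=\mathrm{blockdiag}(\mathbf R_i)$, $\mathbf H=\mathrm{blockdiag}(\mathbf H_i)$. $\sigma_{\min},\sigma_{\max}$ denote smallest and largest eigenvalues of a symmetric matrix. An infinite-horizon competitive equilibrium for $\mathbf x(0)$ is a triple $(\boldsymbol\lambda^\ast,\mathbf U^\ast,\mathbf E^\ast)$, $\boldsymbol\lambda^\ast=(\lambda^\ast_t)_{t\ge0}$,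 such that (i) for each $i$, $((\mathbf u_i^\ast(t))_t,(e_i^\ast(t))_t)$ attains a finite maximum of $\sum_{t=0}^\infty[f_i(\mathbf x_i(t),\mathbf u_i(t))+\lambda^\ast_te_i(t)]$ subject to the dynamics and $e_i(t)\le a_i(t)-h_i(\mathbf u_i(t))$ for all $t$; (ii) $\sum_{i=1}^ne_i^\ast(t)=0$ for all $t$. The infinite-horizon social welfare maximization problem for $\mathbf x(0)$: maximize $\sum_{i=1}^n\sum_{t=0}^\infty f_i(\mathbf x_i(t),\mathbf u_i(t))$ over all inputs and trades subject to the dynamics, $e_i(t)\le a_i(t)-h_i(\mathbf u_i(t))$ and $\sum_{i=1}^ne_i(t)=0$ for all $t\ge0$; it is feasible if it has an admissible point and a finite optimal value. *)

(* Defs.v *)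
From HB Require Import structures.
From mathcomp Require Import all_boot all_order all_algebra.
From mathcomp Require Import all_classical all_reals all_analysis.
Set Implicit Arguments. Unset Strict Implicit. Unset Printing Implicit Defensive.
Import Order.TTheory GRing.Theory Num.Theory.
Import numFieldNormedType.Exports.
Local Open Scope classical_set_scope.
Local Open Scope ring_scope.

Section Defs.
Variable R : realType.

Definition quad (k : nat) (M : 'M[R]_k) (v : 'cV[R]_k) : R :=
  (v^T *m M *m v) ord0 ord0.

Definition normsq (k : nat) (v : 'cV[R]_k) : R := \sum_(j < k) v j ord0 ^+ 2.

Definition spd (k : nat) (M : 'M[R]_k) : Prop :=
  M^T = M /\ forall v : 'cV[R]_k, v != 0 -> 0 < quad M v.

Definition eigs (k : nat) (M : 'M[R]_k) : set R := [set a | eigenvalue M a].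
Definition sigma_max (k : nat) (M : 'M[R]_k) : R := sup (eigs M).
Definition sigma_min (k : nat) (M : 'M[R]_k) : R := inf (eigs M).

Definition bdiag (n p q : nat) (M : 'I_n -> 'M[R]_(p, q))
  : 'M[R]_(\sum_(i < n) p, \sum_(i < n) q) :=
  @mxblock R n n (fun _ => p) (fun _ => q)
    (fun i j => if i == j then M i else 0).

Definition blk (n p : nat) (v : 'cV[R]_(\sum_(i < n) p)) (i : 'I_n) : 'cV[R]_p :=
  @submxcol R n (fun _ => p) 1 v i.

Definition controllable (N M : nat) (A : 'M[R]_N) (B : 'M[R]_(N, M)) : bool :=
  \rank (\mxrow_(k < N) (A ^+ k *m B)) == N.

Definition DARE (N M : nat) (A : 'M[R]_N) (B : 'M[R]_(N, M)) (Q : 'M[R]_N)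
  (Rm : 'M[R]_M) (P : 'M[R]_N) : Prop :=
  P = A^T *m P *m A + Q
      - A^T *m P *m B *m invmx (B^T *m P *m B + Rm) *m B^T *m P *m A.

Definition gainK (N M : nat) (A : 'M[R]_N) (B : 'M[R]_(N, M)) (Rm : 'M[R]_M)
  (P : 'M[R]_N) : 'M[R]_(M, N) :=
  - (invmx (Rm + B^T *m P *m B) *m B^T *m P *m A).

Fixpoint traj (d m : nat) (A : 'M[R]_d) (B : 'M[R]_(d, m)) (x0 : 'cV[R]_d)
  (u : nat -> 'cV[R]_m) (t : nat) : 'cV[R]_d :=
  match t with
  | 0 => x0
  | t'.+1 => A *m traj A B x0 u t' + B *m u t'
  end.

(* infinite-horizon objective: limsup of partial sums (extended real).
   For sequences whose partial sums converge this is the series' value. *)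
Definition objective (g : nat -> R) : \bar R :=
  limn_esup (fun T => (\sum_(t < T) g t)%:E).

Definition sums_to (g : nat -> R) (l : R) : Prop :=
  (fun T => \sum_(t < T) g t) @ \oo --> l.

End Defs.

Section MAS.
Variables (R : realType) (n d m : nat)
  (A_ : 'I_n -> 'M[R]_d) (B_ : 'I_n -> 'M[R]_(d, m))
  (Q_ : 'I_n -> 'M[R]_d) (R_ : 'I_n -> 'M[R]_m) (H_ : 'I_n -> 'M[R]_m)
  (a : 'I_n -> nat -> R) (x0 : 'cV[R]_(\sum_(i < n) d)).

Definition util (i : 'I_n) (x : 'cV[R]_d) (u : 'cV[R]_m) : R :=
  - quad (Q_ i) x - quad (R_ i) u.
Definition cons (i : 'I_n) (u : 'cV[R]_m) : R := quad (H_ i) u.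

Definition xstate (i : 'I_n) (u : nat -> 'cV[R]_m) : nat -> 'cV[R]_d :=
  traj (A_ i) (B_ i) (blk x0 i) u.

Definition SW_admissible (u : 'I_n -> nat -> 'cV[R]_m) (e : 'I_n -> nat -> R) : Prop :=
  (forall i t, e i t <= a i t - cons i (u i t)) /\
  (forall t, \sum_(i < n) e i t = 0).

Definition SW_stage (u : 'I_n -> nat -> 'cV[R]_m) (t : nat) : R :=
  \sum_(i < n) util i (xstate i (u i) t) (u i t).

Definition SW_value : \bar R :=
  ereal_sup [set objective (SW_stage u) | u in
              [set u | exists e, SW_admissible u e]].

Definition SW_feasible : Prop :=
  (exists u e, SW_admissible u e) /\ SW_value \is a fin_num.

Definition SW_optimal (u : 'I_n -> nat -> 'cV[R]_m) (e : 'I_n -> nat -> R) : Prop :=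
  SW_admissible u e /\
  exists l : R, sums_to (SW_stage u) l /\
    forall u' e', SW_admissible u' e' -> (objective (SW_stage u') <= l%:E)%E.

Definition agent_admissible (i : 'I_n) (ui : nat -> 'cV[R]_m) (ei : nat -> R) : Prop :=
  forall t, ei t <= a i t - cons i (ui t).

Definition agent_stage (lam : nat -> R) (i : 'I_n) (ui : nat -> 'cV[R]_m)
  (ei : nat -> R) (t : nat) : R :=
  util i (xstate i ui t) (ui t) + lam t * ei t.

Definition agent_optimal (lam : nat -> R) (i : 'I_n) (ui : nat -> 'cV[R]_m)
  (ei : nat -> R) : Prop :=
  agent_admissible i ui ei /\
  exists l : R, sums_to (agent_stage lam i ui ei) l /\
    forall ui' ei', agent_admissible i ui' ei' ->
      (objective (agent_stage lam i ui' ei') <= l%:E)%E.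

Definition competitive_eq (lam : nat -> R) (u : 'I_n -> nat -> 'cV[R]_m)
  (e : 'I_n -> nat -> R) : Prop :=
  (forall i, agent_optimal lam i (u i) (e i)) /\
  (forall t, \sum_(i < n) e i t = 0).

End MAS.

(* Main.v *)
Require Import Defs.
From HB Require Import structures.
From mathcomp Require Import all_boot all_order all_algebra.
From mathcomp Require Import all_classical all_reals all_analysis.
From mathcomp Require Import lra ring.
Import Order.TTheory GRing.Theory Num.Theory.

Module P1.
Import Order.TTheory GRing.Theory Num.Theory.
Set Implicit Arguments. Unset Strict Implicit. Unset Printing Implicit Defensive.
Local Open Scope ring_scope.

Section QuadAlg.
Variable R : realType.

Definition bl (k : nat) (M : 'M[R]_k) (x y : 'cV[R]_k) : R := (x^T *m M *m y) ord0 ord0.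

Lemma quad_bl k (M : 'M[R]_k) x : quad M x = bl M x x. Proof. by []. Qed.

Lemma blDm k (M1 M2 : 'M[R]_k) x y : bl (M1 + M2) x y = bl M1 x y + bl M2 x y.
Proof. by rewrite /bl mulmxDr mulmxDl mxE. Qed.

Lemma blDl k (M : 'M[R]_k) x1 x2 y : bl M (x1 + x2) y = bl M x1 y + bl M x2 y.
Proof. by rewrite /bl linearD /= !mulmxDl mxE. Qed.

Lemma blDr k (M : 'M[R]_k) x y1 y2 : bl M x (y1 + y2) = bl M x y1 + bl M x y2.
Proof. by rewrite /bl mulmxDr mxE. Qed.

Lemma blZl k (M : 'M[R]_k) c x y : bl M (c *: x) y = c * bl M x y.
Proof. by rewrite /bl linearZ /= -!scalemxAl mxE. Qed.

Lemma blZr k (M : 'M[R]_k) c x y : bl M x (c *: y) = c * bl M x y.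
Proof. by rewrite /bl -scalemxAr mxE. Qed.

Lemma blNl k (M : 'M[R]_k) x y : bl M (- x) y = - bl M x y.
Proof. by rewrite -scaleN1r blZl mulN1r. Qed.

Lemma blNr k (M : 'M[R]_k) x y : bl M x (- y) = - bl M x y.
Proof. by rewrite -scaleN1r blZr mulN1r. Qed.

Lemma blNm k (M : 'M[R]_k) x y : bl (- M) x y = - bl M x y.
Proof. by rewrite /bl mulmxN mulNmx mxE. Qed.

Lemma bl_tr k (M : 'M[R]_k) x y : bl M x y = bl M^T y x.
Proof.
rewrite /bl; transitivity ((x^T *m M *m y)^T ord0 ord0); first by rewrite [RHS]mxE.
by rewrite !trmx_mul trmxK mulmxA.
Qed.

Lemma bl_sym k (M : 'M[R]_k) x y : M^T = M -> bl M x y = bl M y x.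
Proof. by move=> sM; rewrite bl_tr sM. Qed.

Lemma bl_mul k l (F : 'M[R]_(k, l)) (M : 'M[R]_k) (G : 'M[R]_(k, l)) x y :
  bl (F^T *m M *m G) x y = bl M (F *m x) (G *m y).
Proof. by rewrite /bl trmx_mul !mulmxA. Qed.

Lemma bl0m k (x y : 'cV[R]_k) : bl 0 x y = 0.
Proof. by rewrite /bl mulmx0 mul0mx mxE. Qed.

Lemma bl_mulr k l (M : 'M[R]_(k, l)) (x : 'cV[R]_k) (y : 'cV[R]_l) :
  (x^T *m M *m y) ord0 ord0 = (x^T *m (M *m y)) ord0 ord0.
Proof. by rewrite mulmxA. Qed.

Lemma quadD k (M : 'M[R]_k) x y :
  quad M (x + y) = quad M x + quad M y + bl M x y + bl M y x.
Proof. rewrite !quad_bl blDl !blDr; lra. Qed.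

Lemma quadZ k (M : 'M[R]_k) c x : quad M (c *: x) = c ^+ 2 * quad M x.
Proof. by rewrite !quad_bl blZl blZr mulrA expr2. Qed.

Lemma quad0 k (M : 'M[R]_k) : quad M 0 = 0.
Proof. by rewrite -(scale0r 0) quadZ expr2 !mul0r. Qed.

Lemma quadDm k (M1 M2 : 'M[R]_k) x : quad (M1 + M2) x = quad M1 x + quad M2 x.
Proof. exact: blDm. Qed.

Lemma quad_mul k l (F : 'M[R]_(k, l)) (M : 'M[R]_k) x :
  quad (F^T *m M *m F) x = quad M (F *m x).
Proof. exact: bl_mul. Qed.

Lemma normsq_quad k (x : 'cV[R]_k) : normsq x = quad 1%:M x.
Proof.
rewrite /quad mulmx1 mxE /normsq; apply: eq_bigr => j _; by rewrite mxE expr2.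
Qed.

Lemma normsq_ge0 k (x : 'cV[R]_k) : 0 <= normsq x.
Proof. by apply: sumr_ge0 => j _; rewrite sqr_ge0. Qed.

Lemma normsq_eq0 k (x : 'cV[R]_k) : normsq x = 0 -> x = 0.
Proof.
move=> /eqP; rewrite psumr_eq0 => [/allP H|j _]; last by rewrite sqr_ge0.
apply/matrixP => i j; rewrite (ord1 j) mxE.
by have /(_ (mem_index_enum i))/implyP/(_ isT) := H i; rewrite sqrf_eq0 => /eqP.
Qed.

Lemma normsqZ k c (x : 'cV[R]_k) : normsq (c *: x) = c ^+ 2 * normsq x.
Proof. by rewrite !normsq_quad quadZ. Qed.

End QuadAlg.

End P1.
Import P1.

Module P2.
Import Order.TTheory GRing.Theory Num.Theory.
Set Implicit Arguments. Unset Strict Implicit. Unset Printing Implicit Defensive.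
Local Open Scope ring_scope.

Section Step.
Variable R : realType.

Lemma step_id (N Mm : nat) (A : 'M[R]_N) (B : 'M[R]_(N, Mm)) (Q : 'M[R]_N)
  (Rm : 'M[R]_Mm) (P : 'M[R]_N) :
  P^T = P -> Rm^T = Rm -> (Rm + B^T *m P *m B) \in unitmx -> DARE A B Q Rm P ->
  forall x u, quad Q x + quad Rm u =
    quad P x - quad P (A *m x + B *m u)
    + quad (Rm + B^T *m P *m B) (u - gainK A B Rm P *m x).
Proof.
move=> sP sR uS dare x u.
set S := Rm + B^T *m P *m B.
set K := gainK A B Rm P.
have SK : S *m K = - (B^T *m P *m A).
  rewrite /K /gainK mulmxN !mulmxA -/S mulmxV // mul1mx //.
have cross : Rm *m K + B^T *m P *m (A + B *m K) = 0.
  by rewrite mulmxDr addrCA [B^T *m P *m (B *m K)]mulmxA -mulmxDl SK subrr.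
have Pid : Q + K^T *m Rm *m K + (A + B *m K)^T *m P *m (A + B *m K) = P.
  have E1 : K^T *m Rm *m K + K^T *m B^T *m P *m B *m K = - (K^T *m B^T *m P *m A).
    rewrite -!mulmxA -mulmxDr.
    have -> : Rm *m K + B^T *m (P *m (B *m K)) = S *m K by rewrite mulmxDl !mulmxA.
    by rewrite SK mulmxN !mulmxA.
  have E2 : A^T *m P *m B *m K = - (A^T *m P *m B *m invmx (B^T *m P *m B + Rm) *m B^T *m P *m A).
    by rewrite /K /gainK mulmxN !mulmxA addrC.
  rewrite [(A + B *m K)^T]raddfD /= trmx_mul !mulmxDl !mulmxDr !mulmxA.
  rewrite [in RHS]dare -E2.
  move: E1.
  set a1 := K^T *m Rm *m K; set a2 := A^T *m P *m A; set a3 := A^T *m P *m B *m K.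
  set a4 := K^T *m B^T *m P *m A; set a5 := K^T *m B^T *m P *m B *m K.
  move=> E1; apply/matrixP => i j; move/matrixP: E1 => /(_ i j).
  rewrite !mxE; lra.
have [w ->] : exists w, u = K *m x + w by exists (u - K *m x); rewrite addrC subrK.
have -> : A *m x + B *m (K *m x + w) = (A + B *m K) *m x + B *m w.
  by rewrite mulmxDr mulmxDl mulmxA addrA.
have -> : K *m x + w - K *m x = w by rewrite addrC addKr.
rewrite !quadD quadDm quad_mul.
rewrite (bl_sym (K *m x) w sR) (bl_sym ((A + B *m K) *m x) (B *m w) sP).
have g : bl Rm w (K *m x) + bl P (B *m w) ((A + B *m K) *m x) = 0.
  have -> : bl Rm w (K *m x) = (w^T *m (Rm *m K) *m x) ord0 ord0 by rewrite /bl !mulmxA.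
  have -> : bl P (B *m w) ((A + B *m K) *m x) = (w^T *m (B^T *m P *m (A + B *m K)) *m x) ord0 ord0.
    by rewrite /bl trmx_mul !mulmxA.
  have : w^T *m (Rm *m K + B^T *m P *m (A + B *m K)) *m x = 0 by rewrite cross mulmx0 mul0mx.
  by move/matrixP/(_ ord0 ord0); rewrite mulmxDr mulmxDl !mxE.
have h2 : quad P x = quad Q x + quad Rm (K *m x) + quad P ((A + B *m K) *m x).
  by rewrite -[in LHS]Pid !quadDm !quad_mul.
lra.
Qed.

End Step.

End P2.
Import P2.

Module P3.
Import Order.TTheory GRing.Theory Num.Theory.
Import numFieldNormedType.Exports.
Set Implicit Arguments. Unset Strict Implicit. Unset Printing Implicit Defensive.
Local Open Scope ring_scope.
Local Open Scope classical_set_scope.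

Section Ray.
Variable R : realType.

Lemma cont_sum (T : topologicalType) (I : Type) (s : seq I) (F : I -> T -> R) :
  (forall i, continuous (F i)) -> continuous (fun x => \sum_(i <- s) F i x).
Proof.
move=> Fc; elim: s => [|i s IH].
  have -> : (fun x => \sum_(i <- [::]) F i x) = (fun=> 0) by apply: funext => x; rewrite big_nil.
  exact: cst_continuous.
have -> : (fun x => \sum_(j <- i :: s) F j x) = (F i + (fun x => \sum_(j <- s) F j x))%R.
  by apply: funext => x; rewrite big_cons.
move=> x; apply: continuousD; [exact: Fc | exact: IH].
Qed.

Lemma cont_quad_row k (M : 'M[R]_k) : continuous (fun r : 'rV[R]_k => quad M r^T).
Proof.
have -> : (fun r : 'rV[R]_k => quad M r^T) =
    (fun r => \sum_(i < k) \sum_(j < k) (r ord0 j * M j i * r ord0 i)).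
  apply: funext => r; rewrite /quad trmxK mxE; apply: eq_bigr => i _.
  rewrite !mxE big_distrl /=; apply: eq_bigr => j _; by rewrite ?mxE.
apply: cont_sum => i; apply: cont_sum => j x.
apply: (@continuousM _ _ (fun r : 'rV[R]_k => r ord0 j * M j i) (fun r => r ord0 i)).
  apply: (@continuousM _ _ (fun r : 'rV[R]_k => r ord0 j) (fun r => M j i)).
    exact: coord_continuous.
  exact: cst_continuous.
exact: coord_continuous.
Qed.

Lemma sphere_max k (M : 'M[R]_k) : (0 < k)%N ->
  exists2 v : 'cV[R]_k, normsq v = 1 &
    forall x, normsq x = 1 -> quad M x <= quad M v.
Proof.
move=> k0.
pose S := [set r : 'rV[R]_k | normsq r^T = 1].
have S0 : S !=set0.
  pose i0 : 'I_k := Ordinal k0.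
  exists (\row_j (j == i0)%:R); rewrite /S /= /normsq (bigD1 i0) //= big1.
    by rewrite !mxE eqxx expr1n addr0.
  by move=> j /negbTE ji; rewrite !mxE ji expr0n.
have Sc : compact S.
  have Bc : compact [set v : 'rV[R]_k | forall i, v ord0 i \in `[(-1 : R), 1]%R].
    apply: (@rV_compact _  _ (fun=> `[(-1 : R), 1]%classic)).
    by move=> _; apply: segment_compact.
  apply: (subclosed_compact _ Bc).
  - have gc : continuous (fun r : 'rV[R]_k => normsq r^T).
      rewrite (_ : (fun r : 'rV[R]_k => normsq r^T) = (fun r => quad 1%:M r^T)).
        exact: cont_quad_row.
      by apply: funext => r; rewrite normsq_quad.
    have := (proj1 (continuous_closedP _) gc). move=> h. have := h _ (@closed_eq R 1). exact.
  - move=> r; rewrite /S /= => Sr i; rewrite in_itv /=.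
    have : (r ord0 i) ^+ 2 <= 1.
      rewrite -Sr /normsq (bigD1 i) //= mxE lerDl.
      by apply: sumr_ge0 => j _; exact: sqr_ge0.
    move=> h; apply/andP; split; nra.
have [c Sc' cmax] := EVT_max_rV S0 Sc (continuous_subspaceT (@cont_quad_row k M)).
exists c^T; first by move: Sc'; rewrite inE.
move=> x nx; have := cmax x^T; rewrite trmxK; apply; rewrite inE /S /= trmxK //.
Qed.

Lemma sphere_extend k (M : 'M[R]_k) (c : R) :
  (forall x, normsq x = 1 -> quad M x <= c) -> forall x, quad M x <= c * normsq x.
Proof.
move=> H x.
have [nx0|nxn0] := eqVneq (normsq x) 0.
  by rewrite nx0 mulr0 (normsq_eq0 nx0) quad0.
have nx : 0 < normsq x by rewrite lt_def nxn0 normsq_ge0.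
set s := Num.sqrt (normsq x).
have s0 : 0 < s by rewrite sqrtr_gt0.
have ss : s ^+ 2 = normsq x by rewrite sqr_sqrtr // ltW.
pose y := s^-1 *: x.
have xy : x = s *: y by rewrite /y scalerA mulfV ?gt_eqF // scale1r.
have ny : normsq y = 1.
  apply: (@mulfI _ (s ^+ 2)); first by rewrite expf_neq0 // gt_eqF.
  by rewrite -normsqZ -xy mulr1.
rewrite xy quadZ normsqZ ny mulr1 mulrC; apply: ler_wpM2r; first exact: sqr_ge0.
exact: H.
Qed.

Lemma rayleigh_bounds k (M : 'M[R]_k) : (0 < k)%N ->
  exists vlo vhi : 'cV[R]_k, [/\ normsq vlo = 1, normsq vhi = 1 &
    forall x, quad M vlo * normsq x <= quad M x /\ quad M x <= quad M vhi * normsq x].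
Proof.
move=> k0.
have [vhi nh hmax] := sphere_max M k0.
have [vlo nl lmax] := sphere_max (- M) k0.
exists vlo, vhi; split => // x; split; last exact: sphere_extend hmax x.
have := sphere_extend lmax x.
by rewrite !quad_bl !blNm mulNr lerN2.
Qed.

End Ray.

End P3.
Import P3.

Module P4.
Import Order.TTheory GRing.Theory Num.Theory.
Import numFieldNormedType.Exports.
Set Implicit Arguments. Unset Strict Implicit. Unset Printing Implicit Defensive.
Local Open Scope ring_scope.
Local Open Scope classical_set_scope.

Section Eig.
Variable R : realType.

Lemma quadNm k (M : 'M[R]_k) x : quad (- M) x = - quad M x.
Proof. by rewrite !quad_bl blNm. Qed.

Lemma bl_normsq k (N : 'M[R]_k) z v : N *m v = z -> bl N z v = normsq z.
Proof. by move=> <-; rewrite normsq_quad /quad /bl mulmx1 mulmxA. Qed.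

Lemma psd_null k (N : 'M[R]_k) v : N^T = N -> (forall x, 0 <= quad N x) ->
  quad N v = 0 -> N *m v = 0.
Proof.
move=> sN psd qv; set z := N *m v.
have h1 : bl N z v = normsq z by apply: bl_normsq.
have h2 : bl N v z = normsq z by rewrite (bl_sym _ _ sN).
set s := normsq z; set q := quad N z.
have q0 : 0 <= q by apply: psd.
have := psd ((q + 1) *: v + (- s) *: z).
rewrite quadD !quadZ !blZl !blZr h1 h2 qv -/q.
move=> h.
have s0 : 0 <= s by apply: normsq_ge0.
  rewrite -/s !expr2 in h. have : s * s * (q + 2) <= 0 by nra.
move=> h3.
have ss : s = 0.
  apply/eqP; rewrite eq_le s0 andbT.
  have : s * s <= 0 by nra.
  nra.
by apply: normsq_eq0.
Qed.

Lemma quad_scalar k (c : R) (x : 'cV[R]_k) : quad c%:M x = c * normsq x.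
Proof. by rewrite normsq_quad /quad mul_mx_scalar -scalemxAl mxE mulmx1. Qed.

Lemma eig_psd k (M : 'M[R]_k) c v : M^T = M -> v != 0 ->
  (forall x, 0 <= quad (c%:M - M) x) -> quad M v = c * normsq v -> eigenvalue M c.
Proof.
move=> sM v0 psd qv.
have sN : (c%:M - M)^T = c%:M - M by rewrite linearB /= tr_scalar_mx sM.
have := @psd_null _ _ v sN psd.
rewrite quadDm quadNm quad_scalar qv subrr => /(_ erefl) /eqP.
rewrite mulmxBl subr_eq0 mul_scalar_mx => /eqP Mv.
apply/eigenvalueP; exists v^T; last by rewrite trmx_eq0.
by rewrite -sM -trmx_mul -Mv linearZ.
Qed.

Lemma eig_quad k (M : 'M[R]_k) c : M^T = M -> eigenvalue M c ->
  exists x, 0 < normsq x /\ quad M x = c * normsq x.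
Proof.
move=> sM /eigenvalueP [v vM v0]; exists v^T; split.
  rewrite lt_def normsq_ge0 andbT; apply/eqP => /normsq_eq0 /eqP.
  by rewrite trmx_eq0 (negbTE v0).
have Mx : M *m v^T = c *: v^T by rewrite -[M]sM -trmx_mul vM linearZ.
by rewrite /quad -mulmxA Mx -scalemxAr mxE normsq_quad /quad mulmx1.
Qed.

Lemma sigma_rayleigh_ex k (M : 'M[R]_k) : (0 < k)%N -> M^T = M ->
  (exists v, normsq v = 1 /\ quad M v = sigma_min M) /\
  forall x, sigma_min M * normsq x <= quad M x /\ quad M x <= sigma_max M * normsq x.
Proof.
move=> k0 sM.
have [vlo [vhi [nl nh B]]] := rayleigh_bounds M k0.
have ehi : eigenvalue M (quad M vhi).
  apply: (@eig_psd _ _ _ vhi sM).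
  - by apply/eqP => v0; move: nh; rewrite v0 /normsq big1 => [|j _]; rewrite ?mxE ?expr0n //; lra.
  - move=> x; rewrite quadDm quadNm quad_scalar subr_ge0; exact: (proj2 (B x)).
  - by rewrite nh mulr1.
have elo : eigenvalue M (quad M vlo).
  have sM' : (- M)^T = - M by rewrite linearN /= sM.
  have : eigenvalue (- M) (- quad M vlo).
    apply: (@eig_psd _ _ _ vlo sM').
    - by apply/eqP => v0; move: nl; rewrite v0 /normsq big1 => [|j _]; rewrite ?mxE ?expr0n //; lra.
    - move=> x; rewrite quadDm quadNm quad_scalar quadNm opprK.
      have := proj1 (B x); lra.
    - by rewrite nl mulr1 quadNm.
  move=> /eigenvalueP [w wM w0]; apply/eigenvalueP; exists w => //.
  by move: wM; rewrite mulmxN scaleNr => /oppr_inj.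
have bnd : forall c, eigs M c -> quad M vlo <= c /\ c <= quad M vhi.
  move=> c /eig_quad [//|x [x0 qx]]; have [B1 B2] := B x; rewrite qx in B1 B2.
  split.
  - by rewrite -(ler_pM2r x0).
  - by rewrite -(ler_pM2r x0).
have smax : sigma_max M = quad M vhi.
  apply/eqP; rewrite eq_le; apply/andP; split.
    by apply: ge_sup; [exists (quad M vhi) | move=> c /bnd []].
  by apply: ub_le_sup => //; exists (quad M vhi) => c /bnd [].
have smin : sigma_min M = quad M vlo.
  apply/eqP; rewrite eq_le; apply/andP; split.
    by apply: ge_inf => //; exists (quad M vlo) => c /bnd [].
  by apply: lb_le_inf; [exists (quad M vlo) | move=> c /bnd []].
split; first by exists vlo.
by move=> x; rewrite smax smin; exact: B.
Qed.

Lemma sigma_rayleigh k (M : 'M[R]_k) : (0 < k)%N -> M^T = M ->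
  forall x, sigma_min M * normsq x <= quad M x /\ quad M x <= sigma_max M * normsq x.
Proof. by move=> k0 sM; case: (sigma_rayleigh_ex k0 sM). Qed.

End Eig.

End P4.
Import P4.

Module P5.
Import Order.TTheory GRing.Theory Num.Theory.
Set Implicit Arguments. Unset Strict Implicit. Unset Printing Implicit Defensive.
Local Open Scope ring_scope.

Section Blocks.
Variable R : realType.

Definition stack (n p : nat) (u : 'I_n -> 'cV[R]_p) : 'cV[R]_(\sum_(i < n) p) :=
  @mxcol R n (fun _ => p) 1 u.

Lemma blk_stack n p (u : 'I_n -> 'cV[R]_p) i : blk (stack u) i = u i.
Proof. exact: mxcolK. Qed.

Lemma stack_blk n p (v : 'cV[R]_(\sum_(i < n) p)) : stack (blk v) = v.
Proof. exact: submxcolK. Qed.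

Lemma blk_bdiag n p q (M : 'I_n -> 'M[R]_(p, q)) (v : 'cV[R]_(\sum_(i < n) q)) i :
  blk (bdiag M *m v) i = M i *m blk v i.
Proof.
rewrite -[v]stack_blk /bdiag /stack mul_mxblock_mxrow /blk mxcolK.
rewrite (@mxcolK _ _ (fun _ => p)) (bigD1 i) //= eqxx big1 ?addr0 // => j /negbTE ji.
by rewrite eq_sym ji mul0mx.
Qed.

Lemma blkD n p (v w : 'cV[R]_(\sum_(i < n) p)) i : blk (v + w) i = blk v i + blk w i.
Proof. exact: submxcolD. Qed.

Lemma dot_blk n p (w z : 'cV[R]_(\sum_(i < n) p)) :
  w^T *m z = \sum_i (blk w i)^T *m blk z i.
Proof.
rewrite -{1}[w]stack_blk -{1}[z]stack_blk /stack tr_mxcol mul_mxrow_mxcol.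
by [].
Qed.

Lemma quad_bdiag n p (M : 'I_n -> 'M[R]_p) (v : 'cV[R]_(\sum_(i < n) p)) :
  quad (bdiag M) v = \sum_i quad (M i) (blk v i).
Proof.
rewrite /quad -mulmxA dot_blk summxE; apply: eq_bigr => i _.
by rewrite blk_bdiag mulmxA.
Qed.

Lemma tr_bdiag n p (M : 'I_n -> 'M[R]_p) : (bdiag M)^T = bdiag (fun i => (M i)^T).
Proof.
rewrite /bdiag tr_mxblock; apply: eq_mxblock => i j.
by case: eqVneq => [->|ij]; rewrite ?eqxx // ?trmx0.
Qed.

Lemma bdiag_sym n p (M : 'I_n -> 'M[R]_p) : (forall i, (M i)^T = M i) ->
  (bdiag M)^T = bdiag M.
Proof. by move=> H; rewrite tr_bdiag; congr bdiag; apply: funext => i; rewrite H. Qed.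

Lemma spd_psd k (M : 'M[R]_k) : spd M -> forall x, 0 <= quad M x.
Proof.
move=> [_ H] x; have [->|x0] := eqVneq x 0; first by rewrite quad0.
exact/ltW/H.
Qed.

Lemma blk_neq0 n p (v : 'cV[R]_(\sum_(i < n) p)) : v != 0 -> exists i, blk v i != 0.
Proof.
move=> v0; apply/existsP; apply: contraR v0 => /existsPn H.
rewrite -[v]stack_blk /stack.
rewrite (_ : blk v = fun _ => 0); first exact/eqP/mxcol0.
by apply: funext => i; apply/eqP; rewrite -[_ == _]negbK H.
Qed.

Lemma spd_bdiag n p (M : 'I_n -> 'M[R]_p) : (forall i, spd (M i)) -> spd (bdiag M).
Proof.
move=> H; split; first by apply: bdiag_sym => i; case: (H i).
move=> v v0; have [i bi] := blk_neq0 v0.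
rewrite quad_bdiag (bigD1 i) //=.
have h1 : 0 <= \sum_(j | j != i) quad (M j) (blk v j).
  by apply: sumr_ge0 => j _; apply: spd_psd.
have h2 : 0 < quad (M i) (blk v i) by case: (H i) => _; apply.
lra.
Qed.

End Blocks.

End P5.
Import P5.

Module P6.
Import Order.TTheory GRing.Theory Num.Theory.
Import numFieldNormedType.Exports.
Set Implicit Arguments. Unset Strict Implicit. Unset Printing Implicit Defensive.
Local Open Scope ring_scope.
Local Open Scope classical_set_scope.

Section Generic.
Variable R : realType.

Lemma spd_unit (N Mm : nat) (B : 'M[R]_(N, Mm)) (Rm : 'M[R]_Mm) (P : 'M[R]_N) :
  spd Rm -> spd P -> (Rm + B^T *m P *m B) \in unitmx.
Proof.
move=> [_ HR] HP; rewrite unitmxE unitfE; apply/negP => /det0P [v v0 vS].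
have : quad (Rm + B^T *m P *m B) v^T = 0.
  by rewrite /quad trmxK vS mul0mx mxE.
rewrite quadDm quad_mul.
have h1 : 0 < quad Rm v^T by apply: HR; rewrite trmx_eq0.
have h2 : 0 <= quad P (B *m v^T) by apply: spd_psd.
lra.
Qed.

Lemma cvec0 (P : 'M[R]_0) (x : 'cV[R]_0) : quad P x = 0.
Proof. by rewrite (flatmx0 x) quad0. Qed.

Lemma spd_compare k (P Q : 'M[R]_k) : spd P -> spd Q ->
  exists2 c, 1 <= c & forall x, quad P x <= c * quad Q x.
Proof.
move=> HP HQ; case: k P Q HP HQ => [|k] P Q HP HQ.
  by exists 1 => // x; rewrite !cvec0 mulr0.
have [plo [phi [_ nph BP]]] := rayleigh_bounds P (ltn0Sn k).
have [qlo [qhi [nql _ BQ]]] := rayleigh_bounds Q (ltn0Sn k).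
have ql0 : 0 < quad Q qlo.
  case: HQ => _; apply; apply/eqP => q0; move: nql; rewrite q0 -(scale0r 0) normsqZ expr2 !mul0r.
  by move/eqP; rewrite eq_sym oner_eq0.
set c := Num.max 1 (quad P phi / quad Q qlo).
have c1 : 1 <= c by rewrite le_max lexx.
exists c => // x.
have [h1 _] := BQ x; have [_ h2] := BP x.
have hc : quad P phi / quad Q qlo <= c by rewrite le_max lexx orbT.
have nx := normsq_ge0 x.
have hc' : quad P phi <= c * quad Q qlo by rewrite -ler_pdivrMr.
have h3 : quad P phi * normsq x <= c * quad Q qlo * normsq x by apply: ler_wpM2r.
have h4 : c * (quad Q qlo * normsq x) <= c * quad Q x.
  by apply: ler_wpM2l => //; apply: le_trans c1.
rewrite mulrA in h4; lra.
Qed.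

Lemma res_bound k (P W : 'M[R]_k) (x0 x : 'cV[R]_k) (C : R) :
  spd P -> W^T = W -> 0 < C ->
  normsq x0 <= C * sigma_min P / (sigma_max P * sigma_max W) ->
  quad P x <= quad P x0 -> quad W x <= C.
Proof.
move=> HP sW C0; case: k P W x0 x HP sW => [|k] P W x0 x HP sW.
  by move=> _ _; rewrite cvec0; apply: ltW.
move=> hx0 hx.
have [[vlo [nl ql]] BP] := sigma_rayleigh_ex (ltn0Sn k) (proj1 HP).
have BW := sigma_rayleigh (ltn0Sn k) sW.
move: hx0 ql BP BW.
set lo := sigma_min P; set hi := sigma_max P; set w := sigma_max W.
move=> hx0 ql BP BW.
have lo0 : 0 < lo.
  rewrite -ql; case: HP => _; apply; apply/eqP => q0; move: nl.
  by rewrite q0 -(scale0r 0) normsqZ expr2 !mul0r => /eqP; rewrite eq_sym oner_eq0.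
have hilo : lo <= hi by have [_] := BP vlo; rewrite nl mulr1 ql.
have nx := normsq_ge0 x; have nx0 := normsq_ge0 x0.
have [_ Wx] := BW x.
have [w0|w0] := lerP w 0.
  have : w * normsq x <= 0 by rewrite mulr_le0_ge0.
  lra.
have hw : 0 < hi * w by rewrite mulr_gt0 // (lt_le_trans lo0 hilo).
rewrite ler_pdivlMr // in hx0.
have [Px _] := BP x; have [_ Px0] := BP x0.
have h5 : w * (lo * normsq x) <= w * (hi * normsq x0).
  by apply: ler_wpM2l; [exact: ltW | lra].
have h6 : lo * (w * normsq x) <= lo * C.
  have -> : lo * (w * normsq x) = w * (lo * normsq x) by ring.
  apply: (le_trans h5).
  have -> : w * (hi * normsq x0) = normsq x0 * (hi * w) by ring.
  by rewrite [lo * C]mulrC.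
rewrite ler_pM2l // in h6.
lra.
Qed.

Lemma esup_bound (s : nat -> R) (c : R) :
  (forall e, 0 < e -> exists T0, forall T, (T0 <= T)%N -> s T <= c + e) ->
  (limn_esup (fun T => (s T)%:E) <= c%:E)%E.
Proof.
move=> H; apply/lee_addgt0Pr => e e0.
have [T0 HT] := H e e0.
apply: ge_ereal_inf; exists (ereal_sup [set (s T)%:E | T in [set T | (T0 <= T)%N]]).
  exists [set T | (T0 <= T)%N] => //; exact: nbhs_infty_ge.
apply: ge_ereal_sup => _ [T /= T0T <-].
by rewrite -EFinD lee_fin; apply: HT.
Qed.

Lemma objective_cvg (g : nat -> R) (l : R) : sums_to g l -> objective g = l%:E.
Proof.
move=> H; rewrite /objective.
have : (fun T => (\sum_(t < T) g t)%:E) @ \oo --> l%:E.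
  apply: cvg_EFin; first by apply: nearW.
  exact: H.
by move/cvg_limn_einf_sup => [].
Qed.

End Generic.

End P6.
Import P6.

Module P7.
Import Order.TTheory GRing.Theory Num.Theory.
Import numFieldNormedType.Exports.
Set Implicit Arguments. Unset Strict Implicit. Unset Printing Implicit Defensive.
Local Open Scope ring_scope.
Local Open Scope classical_set_scope.

Lemma psum_mono (R : realType) (f : nat -> R) : (forall t, 0 <= f t) ->
  forall T0 T, (T0 <= T)%N -> \sum_(t < T0) f t <= \sum_(t < T) f t.
Proof.
move=> f0 T0; elim => [|T IH]; first by rewrite leqn0 => /eqP ->.
rewrite leq_eqVlt => /orP [/eqP -> //|]; rewrite ltnS => /IH h.
by rewrite big_ord_recr /= (le_trans h) // lerDl.
Qed.

Section Main.
Variables (R : realType) (n d m : nat)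
  (A_ : 'I_n -> 'M[R]_d) (B_ : 'I_n -> 'M[R]_(d, m))
  (Q_ : 'I_n -> 'M[R]_d) (R_ : 'I_n -> 'M[R]_m) (H_ : 'I_n -> 'M[R]_m)
  (a : 'I_n -> nat -> R) (P : 'M[R]_(\sum_(i < n) d))
  (x0 : 'cV[R]_(\sum_(i < n) d)).
Hypotheses (HQ : forall i, spd (Q_ i)) (HR : forall i, spd (R_ i))
  (HP : spd P) (dare : DARE (bdiag A_) (bdiag B_) (bdiag Q_) (bdiag R_) P).

Notation bA := (bdiag A_).
Notation bB := (bdiag B_).
Notation bQ := (bdiag Q_).
Notation bR := (bdiag R_).
Notation K := (gainK (bdiag A_) (bdiag B_) (bdiag R_) P).
Notation S := (bdiag R_ + (bdiag B_)^T *m P *m bdiag B_).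

Definition X (U : nat -> 'cV[R]_(\sum_(i < n) m)) t := traj bA bB x0 U t.
Definition stk (u : 'I_n -> nat -> 'cV[R]_m) t := stack (fun i => u i t).

Lemma X_blk u t i : blk (X (stk u) t) i = xstate A_ B_ x0 i (u i) t.
Proof.
elim: t => [//|t IH] /=.
by rewrite /X /= blkD !blk_bdiag -/(X _ t) IH blk_stack.
Qed.

Lemma SW_stage_stk u t :
  SW_stage A_ B_ Q_ R_ x0 u t = - (quad bQ (X (stk u) t) + quad bR (stk u t)).
Proof.
rewrite /SW_stage !quad_bdiag opprD -!sumrN -big_split /=.
apply: eq_bigr => i _; rewrite /util X_blk /stk blk_stack; lra.
Qed.

Lemma sP : P^T = P. Proof. by case: HP. Qed.
Lemma sbR : bR^T = bR. Proof. by case: (spd_bdiag HR). Qed.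
Lemma uS : S \in unitmx. Proof. exact: spd_unit (spd_bdiag HR) HP. Qed.

Lemma telescope U T :
  \sum_(t < T) (quad bQ (X U t) + quad bR (U t)) =
  quad P x0 - quad P (X U T) + \sum_(t < T) quad S (U t - K *m X U t).
Proof.
elim: T => [|T IH]; first by rewrite !big_ord0 /X /= subrr add0r.
rewrite !big_ord_recr /= IH (step_id sP sbR uS dare) /X /=; lra.
Qed.

Lemma bQ_psd x : 0 <= quad bQ x. Proof. exact: spd_psd (spd_bdiag HQ) x. Qed.
Lemma bR_psd x : 0 <= quad bR x. Proof. exact: spd_psd (spd_bdiag HR) x. Qed.
Lemma S_psd x : 0 <= quad S x.
Proof. by rewrite quadDm quad_mul addr_ge0 // ?bR_psd // spd_psd. Qed.

Definition cost U t := quad bQ (X U t) + quad bR (U t).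

Lemma cost_ge0 U t : 0 <= cost U t.
Proof. by rewrite addr_ge0 // ?bQ_psd ?bR_psd. Qed.

Lemma cost_lb U T : quad P x0 - quad P (X U T) <= \sum_(t < T) cost U t.
Proof.
rewrite /cost telescope lerDl; apply: sumr_ge0 => t _; exact: S_psd.
Qed.

Definition xcl t := (bA + bB *m K) ^+ t *m x0.
Definition ustar (i : 'I_n) (t : nat) := blk (K *m xcl t) i.

Lemma stk_ustar t : stk ustar t = K *m xcl t.
Proof. exact: stack_blk. Qed.

Lemma X_ustar t : X (stk ustar) t = xcl t.
Proof.
elim: t => [|t IH]; first by rewrite /X /xcl /= expr0 mul1mx.
rewrite /X /= -/(X _ t) IH stk_ustar /xcl exprS -mulmxE.
rewrite -mulmxA mulmxDl; congr (_ + _); exact: mulmxA.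
Qed.

Lemma V_step t : quad P (xcl t.+1) <= quad P (xcl t) - quad bQ (xcl t).
Proof.
have := step_id sP sbR uS dare (xcl t) (K *m xcl t).
rewrite subrr quad0 addr0.
have -> : bA *m xcl t + bB *m (K *m xcl t) = xcl t.+1.
  rewrite /xcl exprS -mulmxE -mulmxA mulmxDl; congr (_ + _); exact: mulmxA.
have := bR_psd (K *m xcl t); lra.
Qed.

Lemma V_mono t : quad P (xcl t) <= quad P x0.
Proof.
elim: t => [|t IH]; first by rewrite /xcl expr0 mul1mx.
have := V_step t; have := bQ_psd (xcl t); lra.
Qed.

Lemma V_cvg0 : (fun t => quad P (xcl t)) @ \oo --> 0.
Proof.
have [c c1 Hc] := spd_compare HP (spd_bdiag HQ).
set r := 1 - c^-1.
have c0 : 0 < c by apply: lt_le_trans c1.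
have r0 : 0 <= r by rewrite subr_ge0 invf_le1.
have r1 : r < 1 by rewrite /r ltrBlDr ltrDl invr_gt0.
have Vr : forall t, quad P (xcl t) <= r ^+ t * quad P x0.
  elim => [|t IH]; first by rewrite expr0 mul1r /xcl expr0 mul1mx.
  have h1 := V_step t; have h2 := Hc (xcl t).
  have h3 : c^-1 * quad P (xcl t) <= quad bQ (xcl t).
    by rewrite ler_pdivrMl // mulrC.
  rewrite exprS -mulrA.
  have : quad P (xcl t.+1) <= r * quad P (xcl t) by rewrite /r mulrBl mul1r; lra.
  move=> h4; apply: (le_trans h4); exact: ler_wpM2l.
have V0 : forall t, 0 <= quad P (xcl t) by move=> t; exact: spd_psd.
apply: (@squeeze_cvgr _ _ _ _ (cst 0) (fun t => r ^+ t * quad P x0)).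
- by apply: nearW => t; rewrite V0 Vr.
- exact: cvg_cst.
- have hr : `|r| < 1 by rewrite ger0_norm.
  have := cvgMr_tmp (b := quad P x0) (cvg_expr hr).
  rewrite mul0r; apply; typeclasses eauto.
Qed.

Lemma SW_partial_ustar T :
  \sum_(t < T) SW_stage A_ B_ Q_ R_ x0 ustar t = quad P (xcl T) - quad P x0.
Proof.
under eq_bigr do rewrite SW_stage_stk.
have z : \sum_(t < T) quad S (stk ustar t - K *m X (stk ustar) t) = 0.
  by apply: big1 => t _; rewrite (X_ustar t) stk_ustar subrr quad0.
rewrite sumrN telescope z addr0 (X_ustar T) opprB //.
Qed.

Lemma sums_ustar : sums_to (SW_stage A_ B_ Q_ R_ x0 ustar) (- quad P x0).
Proof.
rewrite /sums_to.
have -> : (fun T => \sum_(t < T) SW_stage A_ B_ Q_ R_ x0 ustar t) =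
          (fun T => quad P (xcl T) - quad P x0).
  by apply: funext => T; rewrite SW_partial_ustar.
rewrite -[X in _ --> X]sub0r; apply: cvgB; [exact: V_cvg0 | exact: cvg_cst].
Qed.

Lemma SW_upper u e : 0 < e -> exists T0, forall T, (T0 <= T)%N ->
  \sum_(t < T) SW_stage A_ B_ Q_ R_ x0 u t <= - quad P x0 + e.
Proof.
move=> e0; set U := stk u.
have key : exists T0, quad P x0 - e <= \sum_(t < T0) cost U t.
  have [c c1 Hc] := spd_compare HP (spd_bdiag HQ).
  have c0 : 0 < c by apply: lt_le_trans c1.
  set dl := e / c.
  have dl0 : 0 < dl by rewrite divr_gt0.
  have [[T HT]|HT] := pselect (exists T, quad bQ (X U T) <= dl).
    exists T; have := cost_lb U T; have := Hc (X U T).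
    have : c * quad bQ (X U T) <= e.
      by rewrite -ler_pdivlMl // mulrC.
    lra.
  have HT' : forall t, dl <= cost U t.
    move=> t; rewrite /cost; have := bR_psd (U t).
    have : dl < quad bQ (X U t).
      by rewrite ltNge; apply/negP => h; apply: HT; exists t.
    lra.
  have V00 : 0 <= quad P x0 by apply: spd_psd.
  set T0 := Num.Def.archi_bound (quad P x0 / dl).
  exists T0.
  have h1 : quad P x0 / dl < T0%:R by apply: archi_boundP; rewrite divr_ge0 // ltW.
  have h2 : \sum_(t < T0) dl <= \sum_(t < T0) cost U t by apply: ler_sum => t _.
  rewrite sumr_const card_ord in h2.
  rewrite ltr_pdivrMr // in h1.
  have : dl *+ T0 = T0%:R * dl by rewrite mulr_natl.
  lra.
have [T0 HT0] := key; exists T0 => T T0T.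
under eq_bigr do rewrite SW_stage_stk.
rewrite sumrN -/U.
have := psum_mono (@cost_ge0 U) T0T.
rewrite /cost /=.
lra.
Qed.

Lemma SW_obj_le u : (objective (SW_stage A_ B_ Q_ R_ x0 u) <= (- quad P x0)%:E)%E.
Proof. by apply: esup_bound => e e0; apply: SW_upper. Qed.

Lemma util_le0 i x u : util Q_ R_ i x u <= 0.
Proof.
rewrite /util; have := spd_psd (HQ i) x; have := spd_psd (HR i) u; lra.
Qed.

Lemma res_ok (Cmin : R) : (forall i, spd (H_ i)) -> 0 < Cmin ->
  normsq x0 <= Cmin * sigma_min P /
     (sigma_max P * sigma_max (K^T *m bdiag H_ *m K)) ->
  forall t, \sum_i cons H_ i (ustar i t) <= Cmin.
Proof.
move=> HH C0 hx0 t.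
have -> : \sum_i cons H_ i (ustar i t) = quad (K^T *m bdiag H_ *m K) (xcl t).
  rewrite quad_mul -stk_ustar quad_bdiag; apply: eq_bigr => i _.
  by rewrite /stk blk_stack.
apply: (res_bound HP _ C0 hx0 (V_mono t)).
rewrite !trmx_mul trmxK mulmxA.
by case: (spd_bdiag HH) => ->.
Qed.

Lemma e_adm (Cmin : R) : (forall i, spd (H_ i)) -> 0 < Cmin ->
  (forall t, Cmin <= \sum_(i < n) a i t) ->
  normsq x0 <= Cmin * sigma_min P /
     (sigma_max P * sigma_max (K^T *m bdiag H_ *m K)) ->
  exists e, SW_admissible H_ a ustar e.
Proof.
move=> HH C0 Ca hx0.
have n0 : (0 < n)%N.
  case: n a Ca => [|n'] a' Ca' //; have := Ca' 0%N; rewrite big_ord0; lra.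
have nR : n%:R != 0 :> R by rewrite pnatr_eq0 -lt0n.
pose s t := \sum_(j < n) (a j t - cons H_ j (ustar j t)).
have s0 : forall t, 0 <= s t.
  move=> t; rewrite /s sumrB subr_ge0.
  exact: le_trans (res_ok HH C0 hx0 t) (Ca t).
exists (fun i t => a i t - cons H_ i (ustar i t) - s t / n%:R); split.
  move=> i t; rewrite lerBlDr lerDl; apply: divr_ge0 => //; exact: ler0n.
move=> t; rewrite sumrB -/(s t) sumr_const card_ord.
have -> : s t / n%:R *+ n = s t / n%:R * n%:R by rewrite mulr_natr.
rewrite divfK //.
by rewrite subrr.
Qed.

Lemma SW_value_eq : SW_value A_ B_ Q_ R_ H_ a x0 = (- quad P x0)%:E ->
  SW_value A_ B_ Q_ R_ H_ a x0 \is a fin_num.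
Proof. by move=> ->. Qed.

Lemma SW_value_val e : SW_admissible H_ a ustar e ->
  SW_value A_ B_ Q_ R_ H_ a x0 = (- quad P x0)%:E.
Proof.
move=> adm; apply/eqP; rewrite eq_le; apply/andP; split.
  apply: ge_ereal_sup => _ [u _ <-]; exact: SW_obj_le.
rewrite -(objective_cvg sums_ustar).
by apply: ereal_sup_ubound; exists ustar => //; exists e.
Qed.

Section Agent.
Variable i : 'I_n.

Definition hterm (t : nat) : R :=
  \sum_(j | j != i) util Q_ R_ j (xstate A_ B_ x0 j (ustar j) t) (ustar j t).
Definition gterm (t : nat) : R := util Q_ R_ i (xstate A_ B_ x0 i (ustar i) t) (ustar i t).

Lemma SW_split u' t : (forall j, j != i -> u' j = ustar j) ->
  SW_stage A_ B_ Q_ R_ x0 u' t =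
  util Q_ R_ i (xstate A_ B_ x0 i (u' i) t) (u' i t) + hterm t.
Proof.
move=> Hu; rewrite /SW_stage (bigD1 i) //=; congr (_ + _).
by apply: eq_bigr => j ji; rewrite Hu.
Qed.

Lemma hterm_le0 t : hterm t <= 0.
Proof. by apply: sumr_le0 => j _; apply: util_le0. Qed.

Definition Gp T := \sum_(t < T) gterm t.
Definition Hp T := \sum_(t < T) hterm t.

Lemma GHp T : Gp T + Hp T = quad P (xcl T) - quad P x0.
Proof.
rewrite /Gp /Hp -big_split -SW_partial_ustar; apply: eq_bigr => t _ /=.
by rewrite (@SW_split ustar t (fun _ _ => erefl)).
Qed.

Lemma Gp_noninc : nonincreasing_seq Gp.
Proof.
move=> T0 T T0T; rewrite /Gp.
have f0 : forall t, 0 <= - gterm t by move=> t; rewrite oppr_ge0; apply: util_le0.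
have := @psum_mono R (fun t => - gterm t) f0 T0 T T0T.
by rewrite !sumrN lerN2.
Qed.

Lemma Hp_noninc : nonincreasing_seq Hp.
Proof.
move=> T0 T T0T; rewrite /Hp.
have f0 : forall t, 0 <= - hterm t by move=> t; rewrite oppr_ge0; apply: hterm_le0.
have := @psum_mono R (fun t => - hterm t) f0 T0 T T0T.
by rewrite !sumrN lerN2.
Qed.

Lemma Hp_le0 T : Hp T <= 0.
Proof. by apply: sumr_le0 => t _; apply: hterm_le0. Qed.

Definition li := inf (range Gp).

Lemma Gp_cvg : Gp @ \oo --> li.
Proof.
apply: nonincreasing_cvgn; first exact: Gp_noninc.
exists (- quad P x0) => _ [T _ <-].
have := GHp T; have := Hp_le0 T; have := spd_psd HP (xcl T); lra.
Qed.

Lemma Hp_ge T : - quad P x0 - li <= Hp T.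
Proof.
have hc : Hp @ \oo --> - quad P x0 - li.
  have -> : Hp = (fun T => (quad P (xcl T) - quad P x0) - Gp T).
    by apply: funext => T'; rewrite -GHp; ring.
  apply: cvgB; last exact: Gp_cvg.
  rewrite -[X in _ --> X]sub0r; apply: cvgB; [exact: V_cvg0 | exact: cvg_cst].
have := nonincreasing_cvgn_ge Hp_noninc (cvgP _ hc) T.
by rewrite (cvg_lim _ hc).
Qed.

Lemma agent_opt (e : nat -> R) :
  agent_optimal A_ B_ Q_ R_ H_ a x0 (fun _ => 0) i (ustar i) e <->
  agent_admissible H_ a i (ustar i) e.
Proof.
split; first by case.
move=> adm; split => //; exists li; split.
  rewrite /sums_to.
  have -> : (fun T => \sum_(t < T) agent_stage A_ B_ Q_ R_ x0 (fun=> 0) i (ustar i) e t) = Gp.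
    apply: funext => T; apply: eq_bigr => t _.
    by rewrite /agent_stage mul0r addr0.
  exact: Gp_cvg.
move=> ui' ei' _.
pose u' := fun j => if j == i then ui' else ustar j.
apply: esup_bound => eps eps0.
have [T0 HT0] := SW_upper u' eps0.
exists T0 => T T0T.
have h1 := HT0 T T0T; have h2 := Hp_ge T.
have : \sum_(t < T) agent_stage A_ B_ Q_ R_ x0 (fun=> 0) i ui' ei' t =
       \sum_(t < T) SW_stage A_ B_ Q_ R_ x0 u' t - Hp T.
  rewrite /Hp -sumrB; apply: eq_bigr => t _.
  rewrite (@SW_split u' t); last by move=> j /negbTE ji; rewrite /u' ji.
  by rewrite /agent_stage mul0r addr0 /u' eqxx addrK.
lra.
Qed.

End Agent.

End Main.

End P7.
Import P7.

Unset Implicit Arguments.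
Local Open Scope ring_scope.

Theorem theorem9 (R : realType) (n d m : nat)
  (A_ : 'I_n -> 'M[R]_d) (B_ : 'I_n -> 'M[R]_(d, m))
  (Q_ : 'I_n -> 'M[R]_d) (R_ : 'I_n -> 'M[R]_m) (H_ : 'I_n -> 'M[R]_m)
  (a : 'I_n -> nat -> R) (Cmin : R) (P : 'M[R]_(\sum_(i < n) d))
  (x0 : 'cV[R]_(\sum_(i < n) d)) :
  (forall i, spd (Q_ i)) -> (forall i, spd (R_ i)) -> (forall i, spd (H_ i)) ->
  controllable (bdiag A_) (bdiag B_) ->
  0 < Cmin -> (forall t, Cmin <= \sum_(i < n) a i t) ->
  spd P -> DARE (bdiag A_) (bdiag B_) (bdiag Q_) (bdiag R_) P ->
  let K := gainK (bdiag A_) (bdiag B_) (bdiag R_) P in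
  let KHK := K^T *m bdiag H_ *m K in
  KHK != 0 ->
  normsq x0 <= Cmin * sigma_min P / (sigma_max P * sigma_max KHK) ->
  (* closed-loop state x(t) = (A + B K)^t x(0) and feedback input u*(t) = K x(t) *)
  let xcl := fun t : nat => (bdiag A_ + bdiag B_ *m K) ^+ t *m x0 in
  let ustar := fun (i : 'I_n) (t : nat) => blk (K *m xcl t) i in
  (* the stacked state under u* is indeed xcl *)
  (forall i t, xstate A_ B_ x0 i (ustar i) t = blk (xcl t) i) /\
  (* (i) *)
  SW_feasible A_ B_ Q_ R_ H_ a x0 /\
  (exists e, SW_optimal A_ B_ Q_ R_ H_ a x0 ustar e) /\
  (* (ii) *)
  (exists e, competitive_eq A_ B_ Q_ R_ H_ a x0 (fun _ => 0) ustar e).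
Proof.
move=> HQ HR HH _ C0 Ca HP dare K KHK _ hx0 xcl ustar.
have ustarE : ustar = P7.ustar A_ B_ R_ P x0 by [].
rewrite ustarE.
have [e adm] := e_adm HQ HR HP dare HH C0 Ca hx0.
split.
  move=> i t; rewrite -X_blk X_ustar //.
split.
  split; first by exists (P7.ustar A_ B_ R_ P x0), e.
  by rewrite (SW_value_val HQ HR HP dare adm).
split.
  exists e; split => //; exists (- quad P x0); split.
    exact: sums_ustar.
  move=> u' e' _; exact: SW_obj_le.
exists e; split; last by case: adm.
move=> i; apply/(agent_opt H_ a x0 HQ HR HP dare).
by case: adm => h _ t; apply: h.
Qed.
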